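(* Let $E_1,E_2$ be vector bundles over $M$ with connections $D_1,D_2$ and let $(E,D)=(E_1\oplus E_2,D_1+D_2)$. Then $D$ is exact if and only if $D_1$ and $D_2$ are both exact.
   Context: For a connection $D$ on $E$: $D^\wedge$ is the exterior covariant derivative $\phi_b{}^\alpha\mapsto D_{[a}\phi_{b]}{}^\alpha$, $\kappa=D^\wedge\circ D$ the curvature (assumed of constant rank). $D$ is exact if every section $\phi$ of $\Lambda^1\otimes E$ with $D^\wedge\phi=\kappa(\psi)$ for some section $\psi$ of $E$ is of the form $D\eta$ for some section $\eta$ of $E$. Statements are local. *)

(* Defs.v *)
(* Local model of a vector bundle with connection:
   M is represented (locally) by an open set U of R^n = 'rV[R]_n, the bundle
   E of rank k is trivialised over U, sections are families indexed by the
   fibre index 'I_k, and a connection is given by its coefficients Γ_a^α_β. *)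
From HB Require Import structures.
From mathcomp Require Import all_boot all_order all_algebra.
From mathcomp Require Import all_classical all_reals all_analysis.
Set Implicit Arguments. Unset Strict Implicit. Unset Printing Implicit Defensive.
Import Order.TTheory GRing.Theory Num.Theory.
Import numFieldNormedType.Exports.
Local Open Scope classical_set_scope.
Local Open Scope ring_scope.

Section Defs.
Variable R : realType.
Variable n : nat.

Definition ebasis (a : 'I_n) : 'rV[R]_n := delta_mx 0 a.

Definition partial (a : 'I_n) (f : 'rV[R]_n -> R) (x : 'rV[R]_n) : R :=
  'D_(ebasis a) f x.

Fixpoint Cm (U : set 'rV[R]_n) (m : nat) (f : 'rV[R]_n -> R) : Prop :=
  match m with
  | 0 => forall x, U x -> {for x, continuous f}
  | m'.+1 => (forall x, U x -> {for x, continuous f}) /\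
             (forall x a, U x -> derivable f x (ebasis a)) /\
             (forall a, Cm U m' (partial a f))
  end.

Definition smooth_on (U : set 'rV[R]_n) (f : 'rV[R]_n -> R) : Prop :=
  forall m, Cm U m f.

Variable k : nat.

(* sections of E, of Λ^1 ⊗ E, of Λ^2 ⊗ E (components) *)
Definition sec0 := 'I_k -> 'rV[R]_n -> R.
Definition sec1 := 'I_n -> 'I_k -> 'rV[R]_n -> R.
Definition sec2 := 'I_n -> 'I_n -> 'I_k -> 'rV[R]_n -> R.

(* connection coefficients Γ_a^α_β : D_a η^α = ∂_a η^α + Γ_a^α_β η^β *)
Definition conn := 'I_n -> 'I_k -> 'I_k -> 'rV[R]_n -> R.

Definition conn_smooth (U : set 'rV[R]_n) (G : conn) : Prop :=
  forall a al be, smooth_on U (G a al be).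

Definition sec0_smooth U (eta : sec0) := forall al, smooth_on U (eta al).
Definition sec1_smooth U (phi : sec1) := forall a al, smooth_on U (phi a al).

Definition Dc (G : conn) (eta : sec0) : sec1 := fun a al x =>
  partial a (eta al) x + \sum_(be < k) G a al be x * eta be x.

Definition Dwedge (G : conn) (phi : sec1) : sec2 := fun a b al x =>
  2^-1 * ((partial a (phi b al) x + \sum_(be < k) G a al be x * phi b be x)
        - (partial b (phi a al) x + \sum_(be < k) G b al be x * phi a be x)).

Definition kappa (G : conn) (psi : sec0) : sec2 := Dwedge G (Dc G psi).

(* matrix of the fibrewise linear map κ_x : E_x -> Λ^2 ⊗ E_x (row β is the
   image of the β-th basis vector, computed on the constant section) *)
Definition curv_mx (G : conn) (x : 'rV[R]_n)
  : 'M[R]_(k, #|{: 'I_n * 'I_n * 'I_k}|) :=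
  \matrix_(be < k, j < #|{: 'I_n * 'I_n * 'I_k}|)
    let: (a, b, al) := enum_val j in
    kappa G (fun ga (_ : 'rV[R]_n) => (ga == be)%:R) a b al x.

Definition const_rank_curv (U : set 'rV[R]_n) (G : conn) : Prop :=
  exists r : nat, forall x, U x -> \rank (curv_mx G x) = r.

Definition exact_conn (U : set 'rV[R]_n) (G : conn) : Prop :=
  forall (phi : sec1) (psi : sec0),
    sec1_smooth U phi -> sec0_smooth U psi ->
    (forall a b al x, U x -> Dwedge G phi a b al x = kappa G psi a b al x) ->
    exists eta : sec0, sec0_smooth U eta /\
      forall a al x, U x -> Dc G eta a al x = phi a al x.

End Defs.

Definition dsum_conn (R : realType) (n k1 k2 : nat)
  (G1 : conn R n k1) (G2 : conn R n k2) : conn R n (k1 + k2) :=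
  fun a i j x =>
    match fintype.split i, fintype.split j with
    | inl i1, inl j1 => G1 a i1 j1 x
    | inr i2, inr j2 => G2 a i2 j2 x
    | _, _ => 0
    end.

(* Main.v *)
Require Import Defs.
From HB Require Import structures.
From mathcomp Require Import all_boot all_order all_algebra.
From mathcomp Require Import all_classical all_reals all_analysis.
Import numFieldNormedType.Exports.
Import GRing.Theory.
Local Open Scope classical_set_scope.
Local Open Scope ring_scope.

Lemma split_l m n (i : 'I_m) : fintype.split (lshift n i) = inl i.
Proof. exact: (unsplitK (inl i)). Qed.
Lemma split_r m n (i : 'I_n) : fintype.split (rshift m i) = inr i.
Proof. exact: (unsplitK (inr i)). Qed.

Section Aux.
Variables (R : realType) (n k1 k2 : nat).
Variables (G1 : conn R n k1) (G2 : conn R n k2).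
Local Notation G := (dsum_conn G1 G2).

Lemma sum_l a (al : 'I_k1) x (f : 'I_(k1 + k2) -> R) :
  \sum_(be < k1 + k2) G a (lshift k2 al) be x * f be =
  \sum_(be < k1) G1 a al be x * f (lshift k2 be).
Proof.
rewrite big_split_ord /= [X in _ + X]big1 ?addr0.
  by apply: eq_bigr => i _; rewrite /dsum_conn !split_l.
by move=> i _; rewrite /dsum_conn split_l split_r mul0r.
Qed.

Lemma sum_r a (al : 'I_k2) x (f : 'I_(k1 + k2) -> R) :
  \sum_(be < k1 + k2) G a (rshift k1 al) be x * f be =
  \sum_(be < k2) G2 a al be x * f (rshift k1 be).
Proof.
rewrite big_split_ord /= big1 ?add0r.
  by apply: eq_bigr => i _; rewrite /dsum_conn !split_r.
by move=> i _; rewrite /dsum_conn split_l split_r mul0r.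
Qed.

Lemma Dc_l eta a al x : Dc G eta a (lshift k2 al) x =
  Dc G1 (fun i => eta (lshift k2 i)) a al x.
Proof. by rewrite /Dc sum_l. Qed.
Lemma Dc_r eta a al x : Dc G eta a (rshift k1 al) x =
  Dc G2 (fun i => eta (rshift k1 i)) a al x.
Proof. by rewrite /Dc sum_r. Qed.

Lemma Dw_l phi a b al x : Dwedge G phi a b (lshift k2 al) x =
  Dwedge G1 (fun a i => phi a (lshift k2 i)) a b al x.
Proof. by rewrite /Dwedge !sum_l. Qed.
Lemma Dw_r phi a b al x : Dwedge G phi a b (rshift k1 al) x =
  Dwedge G2 (fun a i => phi a (rshift k1 i)) a b al x.
Proof. by rewrite /Dwedge !sum_r. Qed.

Lemma ka_l psi a b al x : kappa G psi a b (lshift k2 al) x =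
  kappa G1 (fun i => psi (lshift k2 i)) a b al x.
Proof.
rewrite /kappa Dw_l.
have -> : (fun c i => Dc G psi c (lshift k2 i)) = Dc G1 (fun i => psi (lshift k2 i)).
  by apply/funext => c; apply/funext => i; apply/funext => y; rewrite Dc_l.
by [].
Qed.
Lemma ka_r psi a b al x : kappa G psi a b (rshift k1 al) x =
  kappa G2 (fun i => psi (rshift k1 i)) a b al x.
Proof.
rewrite /kappa Dw_r.
have -> : (fun c i => Dc G psi c (rshift k1 i)) = Dc G2 (fun i => psi (rshift k1 i)).
  by apply/funext => c; apply/funext => i; apply/funext => y; rewrite Dc_r.
by [].
Qed.
End Aux.

Lemma partial0 (R : realType) n a (x : 'rV[R]_n) :
  partial a (fun _ => 0) x = 0.
Proof. exact: (derive_cst (0 : R)). Qed.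

Lemma smooth0 (R : realType) n (U : set 'rV[R]_n) : smooth_on U (fun _ => 0).
Proof.
move=> m; elim: m => [|m IH] /=.
  by move=> x _; exact: cst_continuous.
split; first by move=> x _; exact: cst_continuous.
split; first by move=> x a _; exact: (derivable_cst (0 : R)).
move=> a.
have -> : partial a (fun _ : 'rV[R]_n => (0 : R)) = fun _ => 0.
  by apply/funext => y; exact: partial0.
exact: IH.
Qed.

Lemma Dw0 (R : realType) n k (G : conn R n k) a b al x :
  Dwedge G (fun _ _ _ => 0) a b al x = 0.
Proof.
rewrite /Dwedge !partial0 !big1 ?addr0 ?subrr ?mulr0 // => i _; exact: mulr0.
Qed.

Lemma ka0 (R : realType) n k (G : conn R n k) a b al x :
  kappa G (fun _ _ => 0) a b al x = 0.
Proof.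
rewrite /kappa.
have -> : Dc G (fun _ _ => 0) = fun _ _ _ => 0.
  apply/funext => c; apply/funext => i; apply/funext => y.
  by rewrite /Dc partial0 big1 ?addr0 // => j _; exact: mulr0.
exact: Dw0.
Qed.

Theorem proposition2p6 (R : realType) (n k1 k2 : nat)
  (U : set 'rV[R]_n) (hU : open U)
  (G1 : conn R n k1) (G2 : conn R n k2)
  (hG1 : conn_smooth U G1) (hG2 : conn_smooth U G2)
  (hr1 : const_rank_curv U G1) (hr2 : const_rank_curv U G2) :
  exact_conn U (dsum_conn G1 G2) <-> (exact_conn U G1 /\ exact_conn U G2).
Proof.
split.
- move=> hE; split.
  + move=> phi1 psi1 sphi spsi heq.
    pose phi : sec1 R n (k1 + k2) := fun a i =>
      match fintype.split i with inl i1 => phi1 a i1 | inr _ => fun _ => 0 end.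
    pose psi : sec0 R n (k1 + k2) := fun i =>
      match fintype.split i with inl i1 => psi1 i1 | inr _ => fun _ => 0 end.
    have [|||eta [seta heta]] := hE phi psi.
    * by move=> a i; rewrite /phi; case: (fintype.split i) => // _; exact: smooth0.
    * by move=> i; rewrite /psi; case: (fintype.split i) => // _; exact: smooth0.
    * move=> a b i x Ux; rewrite -(splitK i).
      case: (fintype.split i) => [i1|i2] /=.
        rewrite Dw_l ka_l.
        have -> : (fun a0 i0 => phi a0 (lshift k2 i0)) = phi1.
          by apply/funext => c; apply/funext => j; rewrite /phi split_l.
        have -> : (fun i0 => psi (lshift k2 i0)) = psi1.
          by apply/funext => j; rewrite /psi split_l.
        exact: heq.
      rewrite Dw_r ka_r.
      have -> : (fun a0 i0 => phi a0 (rshift k1 i0)) = fun _ _ _ => 0.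
        by apply/funext => c; apply/funext => j; rewrite /phi split_r.
      have -> : (fun i0 => psi (rshift k1 i0)) = fun _ _ => 0.
        by apply/funext => j; rewrite /psi split_r.
      by rewrite Dw0 ka0.
    * exists (fun i => eta (lshift k2 i)); split; first by move=> i; exact: seta.
      move=> a al x Ux; rewrite -(Dc_l _ _ _ _ G1 G2) heta //= /phi split_l //.
  + move=> phi1 psi1 sphi spsi heq.
    pose phi : sec1 R n (k1 + k2) := fun a i =>
      match fintype.split i with inl _ => fun _ => 0 | inr i2 => phi1 a i2 end.
    pose psi : sec0 R n (k1 + k2) := fun i =>
      match fintype.split i with inl _ => fun _ => 0 | inr i2 => psi1 i2 end.
    have [|||eta [seta heta]] := hE phi psi.
    * by move=> a i; rewrite /phi; case: (fintype.split i) => // _; exact: smooth0.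
    * by move=> i; rewrite /psi; case: (fintype.split i) => // _; exact: smooth0.
    * move=> a b i x Ux; rewrite -(splitK i).
      case: (fintype.split i) => [i1|i2] /=.
        rewrite Dw_l ka_l.
        have -> : (fun a0 i0 => phi a0 (lshift k2 i0)) = fun _ _ _ => 0.
          by apply/funext => c; apply/funext => j; rewrite /phi split_l.
        have -> : (fun i0 => psi (lshift k2 i0)) = fun _ _ => 0.
          by apply/funext => j; rewrite /psi split_l.
        by rewrite Dw0 ka0.
      rewrite Dw_r ka_r.
      have -> : (fun a0 i0 => phi a0 (rshift k1 i0)) = phi1.
        by apply/funext => c; apply/funext => j; rewrite /phi split_r.
      have -> : (fun i0 => psi (rshift k1 i0)) = psi1.
        by apply/funext => j; rewrite /psi split_r.
      exact: heq.
    * exists (fun i => eta (rshift k1 i)); split; first by move=> i; exact: seta.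
      move=> a al x Ux; rewrite -(Dc_r _ _ _ _ G1 G2) heta //= /phi split_r //.
- move=> [h1 h2] phi psi sphi spsi heq.
  have [||| eta1 [s1 e1]] := h1 (fun a i => phi a (lshift k2 i)) (fun i => psi (lshift k2 i)).
  + by move=> a i; exact: sphi.
  + by move=> i; exact: spsi.
  + by move=> a b i x Ux; rewrite -(Dw_l _ _ _ _ G1 G2) -(ka_l _ _ _ _ G1 G2) heq.
  have [||| eta2 [s2 e2]] := h2 (fun a i => phi a (rshift k1 i)) (fun i => psi (rshift k1 i)).
  + by move=> a i; exact: sphi.
  + by move=> i; exact: spsi.
  + by move=> a b i x Ux; rewrite -(Dw_r _ _ _ _ G1 G2) -(ka_r _ _ _ _ G1 G2) heq.
  pose eta : sec0 R n (k1 + k2) := fun i =>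
    match fintype.split i with inl i1 => eta1 i1 | inr i2 => eta2 i2 end.
  exists eta; split.
    by move=> i; rewrite /eta; case: (fintype.split i).
  move=> a i x Ux; rewrite -(splitK i).
  case: (fintype.split i) => [i1|i2] /=.
    rewrite Dc_l -e1 //.
    have -> : (fun j => eta (lshift k2 j)) = eta1 by apply/funext => j; rewrite /eta split_l.
    by [].
  rewrite Dc_r -e2 //.
    have -> : (fun j => eta (rshift k1 j)) = eta2 by apply/funext => j; rewrite /eta split_r.
    by [].
Qed.
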